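(* Let $S(\mathbf{G},\mathbf{\Sigma})$ be a constrained switching system and $T\ge1$ an integer. Let $S^T$ be its $T$-product lift and $S_{T-1}$ its $(T-1)$-path-dependent lift. Then $$\gamma_*(S_{T-1})\le\gamma_*(S^T)^{1/T}.$$
   Context: An automaton $\mathbf{G}(V,E)$ is a strongly connected directed graph with finite node set $V$ and finite edge set $E$ of labelled edges $(v,w,\sigma)$, $\sigma$ indexing a matrix $A_\sigma$ of a finite set $\mathbf{\Sigma}\subset\mathbb{R}^{n\times n}$. A path of length $T$ is a sequence of $T$ consecutive edges. The constrained switching system $S(\mathbf{G},\mathbf{\Sigma})$ is $x_{t+1}=A_{\sigma(t)}x_t$ with switching sequences equal to label sequences of paths in $\mathbf{G}$. $T$-product lift $S^T$: automaton with the same nodes $V$ and one edge $(v,w,\{\sigma(1)\dots\sigma(T)\})$ per path of length $T$ in $\mathbf{G}$ from $v$ to $w$ with labels $\sigma(1),\dots,\sigma(T)$, whose associated matrix is $A_{\sigma(T)}\cdots A_{\sigma(1)}$. $M$-path-dependent lift $S_M$ ($M\ge0$): same matrix set $\mathbf{\Sigma}$; for $M=0$ the automaton is $\mathbf{G}$; for $M\ge1$ the automaton has one node $v_p$ per path $p$ of length $M$ in $\mathbf{G}$, and for each path $p=(e_1,\dots,e_{M+1})$ of length $M+1$ in $\mathbf{G}$ an edge $(v_{p^-},v_{p^+},\sigma_p)$ where $p^-=(e_1,\dots,e_M)$, $p^+=(e_2,\dots,e_{M+1})$ and $\sigma_p$ is the label of $e_{M+1}$. For a constrained switching system $S'$ on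 automaton $(V',E')$, $\gamma_*(S')$ is the infimum of $\gamma$ such that there exist symmetric $Q_v\succ0$ ($v\in V'$) with $\gamma^2Q_v-A_\sigma^\top Q_wA_\sigma\succeq0$ for all $(v,w,\sigma)\in E'$. *)

(* Defs.v *)
From HB Require Import structures.
From mathcomp Require Import all_boot all_order all_algebra.
From mathcomp Require Import boolp classical_sets reals exp.
Set Implicit Arguments. Unset Strict Implicit. Unset Printing Implicit Defensive.
Import Order.TTheory GRing.Theory Num.Theory.
Local Open Scope ring_scope.

Section Defs.
Variables (R : realType) (n : nat).

Definition posdef (Q : 'M[R]_n) : Prop :=
  forall x : 'cV[R]_n, x != 0 -> 0 < (x^T *m Q *m x) 0 0.
Definition psd (Q : 'M[R]_n) : Prop :=
  forall x : 'cV[R]_n, 0 <= (x^T *m Q *m x) 0 0.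

Definition gamma_star (N L : finType) (E : {set N * N * L})
  (A : L -> 'M[R]_n) : R :=
  inf (fun g : R => 0 <= g /\
     exists Q : N -> 'M[R]_n,
       (forall v, (Q v)^T = Q v /\ posdef (Q v)) /\
       (forall v w s, (v, w, s) \in E ->
          psd (g ^+ 2 *: Q v - (A s)^T *m Q w *m A s))).
End Defs.

Section Automata.
Variables (V L : finType) (E : {set V * V * L}).

Definition edge_rel : rel V := fun v w => [exists s : L, (v, w, s) \in E].
Definition strongly_connected : Prop := forall v w : V, connect edge_rel v w.

Definition consec (e e' : V * V * L) : bool := e.1.2 == e'.1.1.
Definition is_path (p : seq (V * V * L)) : bool :=
  all (fun e => e \in E) p && sorted consec p.
Definition pstart (p : seq (V * V * L)) (v : V) : bool :=
  if p is e :: _ then e.1.1 == v else false.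
Definition pend (p : seq (V * V * L)) (w : V) : bool :=
  if p is e :: p' then (last e p').1.2 == w else false.

Definition prodlift_edges (T : nat) : {set V * V * (T.-tuple L)} :=
  [set x | [exists p : T.-tuple (V * V * L),
     [&& is_path p, pstart p x.1.1, pend p x.1.2 &
         map (fun e => e.2) p == val x.2]]].

Definition pnode (M : nat) := {p : M.-tuple (V * V * L) | is_path p}.
HB.instance Definition _ M := Finite.on (pnode M).

Definition pathlift_edges (M : nat) : {set pnode M * pnode M * L} :=
  [set x : pnode M * pnode M * L | [exists e : V * V * L,
     [&& is_path (rcons (val x.1.1 : seq _) e),
         (val x.1.2 : seq _) == behead (rcons (val x.1.1 : seq _) e) &
         e.2 == x.2]]].
End Automata.

(* matrix of a label sequence s(1)..s(T): A_{s(T)} ... A_{s(1)} *)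
Definition prodlift_mx (R : realType) (n : nat) (L : finType)
  (A : L -> 'M[R]_n) (T : nat) (s : T.-tuple L) : 'M[R]_n :=
  foldl (fun M l => A l *m M) 1%:M (val s).

Definition gamma_pathdep (R : realType) (n : nat) (V L : finType)
  (E : {set V * V * L}) (A : L -> 'M[R]_n) (M : nat) : R :=
  match M with
  | 0 => gamma_star E A
  | M'.+1 => gamma_star (pathlift_edges E M'.+1) A
  end.

(* Main.v *)
Require Import Defs.
From HB Require Import structures.
From mathcomp Require Import all_boot all_order all_algebra zify.
From mathcomp Require Import boolp classical_sets reals exp.
From mathcomp Require Import ring lra.
Import Order.TTheory GRing.Theory Num.Theory.
Set Implicit Arguments. Unset Strict Implicit. Unset Printing Implicit Defensive.
Local Open Scope ring_scope.

Section Mx.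
Variables (R : realType) (n : nat).
Implicit Types (Q X Y P N : 'M[R]_n) (x z : 'cV[R]_n).

Definition qf Q x : R := (x^T *m Q *m x) 0 0.

Lemma qfD Q1 Q2 x : qf (Q1 + Q2) x = qf Q1 x + qf Q2 x.
Proof. by rewrite /qf mulmxDr mulmxDl !mxE. Qed.
Lemma qfB Q1 Q2 x : qf (Q1 - Q2) x = qf Q1 x - qf Q2 x.
Proof. by rewrite /qf mulmxBr mulmxBl !mxE. Qed.
Lemma qfZ (a : R) Q x : qf (a *: Q) x = a * qf Q x.
Proof. by rewrite /qf -scalemxAr -scalemxAl mxE. Qed.
Lemma qfM (B : 'M[R]_n) X x : qf (B *m X *m B^T) x = qf X (B^T *m x).
Proof. by rewrite /qf trmx_mul trmxK !mulmxA. Qed.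
Lemma qf_sum k (F : 'I_k -> 'M[R]_n) x : qf (\sum_(i < k) F i) x = \sum_(i < k) qf (F i) x.
Proof. by rewrite /qf mulmx_sumr mulmx_suml summxE. Qed.
Lemma qf0 Q : qf Q 0 = 0.
Proof. by rewrite /qf mulmx0 mxE. Qed.

Lemma psdE Q : psd Q <-> forall x, 0 <= qf Q x.
Proof. by []. Qed.
Lemma posdefE Q : posdef Q <-> forall x, x != 0 -> 0 < qf Q x.
Proof. by []. Qed.

Lemma psdD (A1 A2 : 'M[R]_n) : psd A1 -> psd A2 -> psd (A1 + A2).
Proof. rewrite !psdE => h1 h2 x; rewrite qfD; have := h1 x; have := h2 x; lra. Qed.
Lemma psdZ (a : R) (A1 : 'M[R]_n) : 0 <= a -> psd A1 -> psd (a *: A1).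
Proof. by rewrite !psdE => ha h x; rewrite qfZ mulr_ge0 //; apply: h. Qed.
Lemma psd0 : @psd R n 0.
Proof. by move=> x; rewrite mulmx0 mul0mx mxE. Qed.
Lemma psd_conj (B : 'M[R]_n) X : psd X -> psd (B *m X *m B^T).
Proof. by rewrite !psdE => h x; rewrite qfM; apply: h. Qed.
Lemma posdef_psd Q : posdef Q -> psd Q.
Proof.
rewrite posdefE psdE => h x; have [->|/h/ltW//] := eqVneq x 0.
by rewrite qf0.
Qed.
Lemma posdefD (A1 A2 : 'M[R]_n) : posdef A1 -> psd A2 -> posdef (A1 + A2).
Proof.
rewrite !posdefE psdE => h1 h2 x /h1; have := h2 x; rewrite qfD; lra.
Qed.
Lemma posdefZ (a : R) (A1 : 'M[R]_n) : 0 < a -> posdef A1 -> posdef (a *: A1).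
Proof. by rewrite !posdefE => ha h x /h; rewrite qfZ; apply: mulr_gt0. Qed.

Lemma posdef_unit Q : posdef Q -> Q \in unitmx.
Proof.
move=> h; rewrite unitmxE unitfE; apply/negP => /det0P[v vn0 vQ].
have : v^T != 0 by rewrite trmx_eq0.
by move/h; rewrite trmxK vQ mul0mx mxE ltxx.
Qed.

Lemma sym_inv Q : Q^T = Q -> (invmx Q)^T = invmx Q.
Proof. by move=> hs; rewrite trmx_inv hs. Qed.

Lemma posdef_inv Q : Q^T = Q -> posdef Q -> posdef (invmx Q).
Proof.
move=> hs hp x xn0; have hu := posdef_unit hp.
set y := invmx Q *m x.
have xE : x = Q *m y by rewrite /y mulKVmx.
have yn0 : y != 0 by apply: contraNneq xn0 => hy; rewrite xE hy mulmx0.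
clearbody y; rewrite xE trmx_mul hs !mulmxA mulmxK //.
exact: hp.
Qed.

Lemma dual_psd X Y (B : 'M[R]_n) :
  X^T = X -> posdef X -> Y^T = Y -> posdef Y ->
  psd (Y - B^T *m X *m B) -> psd (invmx X - B *m invmx Y *m B^T).
Proof.
move=> sX pX sY pY h z.
have uX := posdef_unit pX; have uY := posdef_unit pY.
set Xi : 'M[R]_n := invmx X; set Yi : 'M[R]_n := invmx Y.
have sXi : Xi^T = Xi by apply: sym_inv.
have sYi : Yi^T = Yi by apply: sym_inv.
set w := B^T *m z.
set u := Yi *m w.
set v := Xi *m z - B *m u.
have h1 : 0 <= qf (Y - B^T *m X *m B) u := h u.
have h2 : 0 <= qf X v := posdef_psd pX v.
suff : 0 <= qf (Xi - B *m Yi *m B^T) z by [].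

rewrite qfB in h1; rewrite qfB (qfM B Yi z) -/w.
have e1 : qf Y u = qf Yi w.
  by rewrite /qf /u trmx_mul sYi !mulmxA mulmxKV.
have e2 : qf (B^T *m X *m B) u = qf X (B *m u).
  by have := qfM B^T X u; rewrite !trmxK.
have e3 : qf X v = qf Xi z - 2 * qf Yi w + qf X (B *m u).
  rewrite /qf /v linearB /= [(_ - _)^T]linearB /= !mulmxBl.
  have a1 : (Xi *m z)^T *m X *m (Xi *m z) = z^T *m Xi *m z.
    by rewrite trmx_mul sXi !mulmxA mulmxKV.
  have a2 : (Xi *m z)^T *m X *m (B *m u) = w^T *m Yi *m w.
    by rewrite trmx_mul sXi !mulmxA mulmxKV // /u /w trmx_mul trmxK ?mulmxA.
  have a3 : (B *m u)^T *m X *m (Xi *m z) = w^T *m Yi *m w.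
    by rewrite trmx_mul !mulmxA mulmxK // /u trmx_mul sYi /w.
  rewrite a1 a2 a3.
  move: (z^T *m Xi *m z) (w^T *m Yi *m w) ((B *m u)^T *m X *m (B *m u)) => M1 M2 M3.
  rewrite !mxE; lra.
rewrite e1 e2 in h1; rewrite e3 in h2; lra.
Qed.


Lemma qf1 x : qf 1%:M x = \sum_i x i 0 ^+ 2.
Proof. by rewrite /qf mulmx1 mxE; apply: eq_bigr => i _; rewrite mxE expr2. Qed.

Lemma sq_le_qf1 x i : x i 0 ^+ 2 <= qf 1%:M x.
Proof.
rewrite qf1 (bigD1 i) //= lerDl; apply: sumr_ge0 => j _; exact: sqr_ge0.
Qed.

Lemma posdef1 : posdef (1%:M : 'M[R]_n).
Proof.
apply/posdefE => x xn0; rewrite lt_def; apply/andP; split; last first.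
  by rewrite qf1; apply: sumr_ge0 => i _; exact: sqr_ge0.
apply: contraNneq xn0; rewrite qf1 => /psumr_eq0P h.
apply/eqP/matrixP => i j; rewrite (ord1 j) mxE.
by apply/eqP; rewrite -sqrf_eq0; apply/eqP; apply: h => // k _; exact: sqr_ge0.
Qed.

Lemma term_bound (a b c S : R) : a ^+ 2 <= S -> b ^+ 2 <= S -> a * c * b <= `|c| * S.
Proof.
move=> ha hb.
have hab : `|a| * `|b| <= S.
  have : 0 <= (`|a| - `|b|) ^+ 2 by exact: sqr_ge0.
  rewrite -(real_normK (num_real a)) in ha; rewrite -(real_normK (num_real b)) in hb.
  nra.
apply: (le_trans (ler_norm _)); rewrite !normrM (mulrC `|a|) -mulrA.
by apply: ler_wpM2l => //; rewrite mulrC.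
Qed.

Definition mxC N : R := \sum_i \sum_j `|N i j|.

Lemma mxC_ge0 N : 0 <= mxC N.
Proof. by apply: sumr_ge0 => i _; apply: sumr_ge0 => j _. Qed.

Lemma qf_bound N x : qf N x <= mxC N * qf 1%:M x.
Proof.
have -> : qf N x = \sum_i \sum_j x i 0 * N i j * x j 0.
  rewrite /qf mxE exchange_big /=; apply: eq_bigr => j _.
  by rewrite mxE mulr_suml; apply: eq_bigr => i _; rewrite mxE.
rewrite /mxC mulr_suml; apply: ler_sum => i _; rewrite mulr_suml.
by apply: ler_sum => j _; apply: term_bound; apply: sq_le_qf1.
Qed.

End Mx.

Section Feas.
Variables (R : realType) (n : nat).

Definition feas (N L : finType) (E : {set N * N * L}) (A : L -> 'M[R]_n) (g : R) : Prop :=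
  0 <= g /\
     exists Q : N -> 'M[R]_n,
       (forall v, (Q v)^T = Q v /\ posdef (Q v)) /\
       (forall v w s, (v, w, s) \in E ->
          psd (g ^+ 2 *: Q v - (A s)^T *m Q w *m A s)).

Lemma gamma_starE (N L : finType) (E : {set N * N * L}) (A : L -> 'M[R]_n) :
  gamma_star E A = inf (feas E A).
Proof. by []. Qed.

Lemma feas_lb (N L : finType) (E : {set N * N * L}) (A : L -> 'M[R]_n) :
  lbound (feas E A) 0.
Proof. by move=> g []. Qed.

Lemma feas_ne (N L : finType) (E : {set N * N * L}) (A : L -> 'M[R]_n) :
  exists g, feas E A g.
Proof.
pose Ct := \sum_l mxC ((A l)^T *m A l).
have Ct0 : 0 <= Ct by apply: sumr_ge0 => l _; apply: mxC_ge0.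
exists (Ct + 1); split; first lra.
exists (fun _ => 1%:M); split; first by move=> v; rewrite trmx1; split => //; exact: posdef1.
move=> v w s _; apply/psdE => x.
rewrite qfB qfZ mulmx1.
have h1 := qf_bound ((A s)^T *m A s) x.
have h2 : mxC ((A s)^T *m A s) <= Ct.
  by rewrite /Ct (bigD1 s) //= lerDl; apply: sumr_ge0 => l _; apply: mxC_ge0.
have h3 : 0 <= qf 1%:M x := posdef_psd (@posdef1 R n) x.
have h4 : 0 <= mxC ((A s)^T *m A s) := mxC_ge0 _.
nra.
Qed.

Lemma feas_up (N L : finType) (E : {set N * N * L}) (A : L -> 'M[R]_n) g g' :
  feas E A g -> g <= g' -> feas E A g'.
Proof.
move=> [g0 [Q [hQ hE]]] gg'; split; first exact: le_trans gg'.
exists Q; split => // v w s vws.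
have -> : g' ^+ 2 *: Q v - (A s)^T *m Q w *m A s =
   (g' ^+ 2 - g ^+ 2) *: Q v + (g ^+ 2 *: Q v - (A s)^T *m Q w *m A s).
  by rewrite scalerBl addrA subrK.
apply: psdD; last exact: hE.
apply: psdZ; last by apply: posdef_psd; case: (hQ v).
by rewrite subr_ge0 lerXn2r // ?nnegrE // (le_trans g0).
Qed.

End Feas.

Section Lift.
Variables (R : realType) (n : nat) (V L : finType) (E : {set V * V * L}) (A : L -> 'M[R]_n).
Notation ed := (V * V * L)%type.

Definition Pi (d : seq ed) : 'M[R]_n :=
  foldl (fun M l => A l *m M) 1%:M (map (fun e => e.2) d).
Definition startd (w0 : V) (d : seq ed) : V := if d is e :: _ then e.1.1 else w0.
Definition endv (e0 : ed) (s : seq ed) : V := (last e0 s).1.2.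

Lemma Pi_rcons d e : Pi (rcons d e) = A e.2 *m Pi d.
Proof. by rewrite /Pi map_rcons foldl_rcons. Qed.
Lemma startd_rcons w d e : startd w (rcons d e) = startd e.1.1 d.
Proof. by case: d. Qed.

Variables (P : V -> 'M[R]_n) (c : R).
Hypothesis c0 : 0 < c.
Hypothesis Psym : forall v, (P v)^T = P v.
Hypothesis Ppd : forall v, posdef (P v).

Definition Fd (w0 : V) (d : seq ed) : 'M[R]_n :=
  c ^+ size d *: (Pi d *m P (startd w0 d) *m (Pi d)^T).
Definition Pn (K : nat) (e0 : ed) (s : seq ed) : 'M[R]_n :=
  \sum_(j < K.+1) Fd (endv e0 s) (drop (K - j) s).

Lemma Fd_nil w : Fd w [::] = P w.
Proof. by rewrite /Fd /Pi /= expr0 scale1r mul1mx trmx1 mulmx1. Qed.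

Lemma Fd_rcons w d e :
  A e.2 *m Fd e.1.1 d *m (A e.2)^T = c^-1 *: Fd w (rcons d e).
Proof.
rewrite /Fd Pi_rcons startd_rcons size_rcons scalerA exprS mulrA mulVf ?gt_eqF //.
by rewrite mul1r -scalemxAr -scalemxAl trmx_mul !mulmxA.
Qed.

Lemma Fd_sym w d : (Fd w d)^T = Fd w d.
Proof. by rewrite /Fd linearZ /= !trmx_mul trmxK Psym !mulmxA. Qed.

Lemma Fd_psd w d : psd (Fd w d).
Proof.
apply: psdZ; first by apply: exprn_ge0; apply: ltW.
by apply: psd_conj; apply: posdef_psd.
Qed.

Lemma Pn_sym K e0 s : (Pn K e0 s)^T = Pn K e0 s.
Proof. by rewrite /Pn linear_sum; apply: eq_bigr => j _; exact: Fd_sym. Qed.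

Lemma Pn_pd K e0 s : size s = K -> posdef (Pn K e0 s).
Proof.
move=> hs; rewrite /Pn big_ord_recl /= subn0 drop_oversize ?hs // Fd_nil.
apply: posdefD => //.
elim/big_ind: _ => //; [exact: psd0 | exact: psdD | move=> j _; exact: Fd_psd].
Qed.

Lemma Pn_step K e0 e0' s e :
  size s = K -> endv e0 s = e.1.1 -> endv e0' (behead (rcons s e)) = e.1.2 ->
  A e.2 *m Pn K e0 s *m (A e.2)^T =
  c^-1 *: (Pn K e0' (behead (rcons s e)) - P e.1.2) +
  c ^+ K *: (Pi (rcons s e) *m P (startd e.1.1 s) *m (Pi (rcons s e))^T).
Proof.
move=> hs he he'.
have hs' : size (behead (rcons s e)) = K by rewrite size_behead size_rcons.
rewrite /Pn big_ord_recr /= subnn drop0 big_ord_recl /= subn0 drop_oversize ?hs' //.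
have addKl : forall X Y : 'M[R]_n, X + Y - X = Y by move=> X Y; rewrite addrC addKr.
rewrite he he' Fd_nil addKl mulmxDr mulmxDl; congr (_ + _).
  rewrite mulmx_sumr mulmx_suml scaler_sumr; apply: eq_bigr => j _.
  rewrite (Fd_rcons e.1.2); congr (_ *: Fd _ _).
  rewrite /bump leq0n add1n -drop1 drop_drop.
  have -> : (K - j.+1 + 1 = K - j)%N by have := ltn_ord j; lia.
  by rewrite drop_rcons // hs leq_subr.
by rewrite /Fd hs Pi_rcons -scalemxAr -scalemxAl trmx_mul !mulmxA.
Qed.

End Lift.

Section Key.
Variables (R : realType) (n : nat) (V L : finType) (E : {set V * V * L}) (A : L -> 'M[R]_n).

Lemma subsubK (X a b : 'M[R]_n) : X - (X - a + b) = a - b.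
Proof. by rewrite opprD opprB addrA addrCA subrr addr0. Qed.

Lemma key_T1 (r : R) : 0 < r ->
  feas (prodlift_edges E 1) (prodlift_mx A (T:=1)) (r ^+ 1) -> feas E A r.
Proof.
move=> r0 [_ [Q [hQ hE]]]; split; first exact: ltW.
exists Q; split => // v w s vws.
have hm : (v, w, [tuple s]) \in prodlift_edges E 1.
  rewrite inE /=; apply/existsP; exists [tuple (v, w, s)].
  by rewrite /is_path /= vws /= !eqxx.
have := hE _ _ _ hm; rewrite expr1.
by rewrite /prodlift_mx /= mulmx1.
Qed.

Lemma key_step (M : nat) (r : R) : 0 < r ->
  feas (prodlift_edges E M.+2) (prodlift_mx A (T:=M.+2)) (r ^+ M.+2) ->
  feas (pathlift_edges E M.+1) A r.
Proof.
move=> r0 [_ [Q [hQ hE]]].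
set c := (r ^+ 2)^-1.
have c0 : 0 < c by rewrite invr_gt0 exprn_gt0.
pose P v := invmx (Q v).
have Psym v : (P v)^T = P v by apply: sym_inv; case: (hQ v).
have Ppd v : posdef (P v) by case: (hQ v) => hs hp; apply: posdef_inv.
have Hd : forall s e, size s = M.+1 -> is_path E (rcons s e) ->
   psd (P e.1.2 - c ^+ M.+2 *: (Pi A (rcons s e) *m P (startd e.1.1 s) *m (Pi A (rcons s e))^T)).
  move=> s e.
  case: s => [//|x s1] hs hp.
  have szT : size (rcons (x :: s1) e) == M.+2 by rewrite size_rcons hs.
  pose t := Tuple szT.
  have hm : (x.1.1, e.1.2, map_tuple (fun e => e.2) t) \in prodlift_edges E M.+2.
    rewrite inE /=; apply/existsP; exists t.
    by rewrite /= hp /= last_rcons !eqxx.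
  have := hE _ _ _ hm.
  have -> : prodlift_mx A (map_tuple (fun e => e.2) t) = Pi A (rcons (x :: s1) e) by [].
  set B := Pi A _ => h.
  have g0 : 0 < (r ^+ M.+2) ^+ 2 by rewrite !exprn_gt0.
  have := @dual_psd R n (Q e.1.2) ((r ^+ M.+2) ^+ 2 *: Q x.1.1) B.
  case: (hQ e.1.2) => s2 p2; case: (hQ x.1.1) => s1' p1'.
  move=> /(_ s2 p2); rewrite linearZ /= s1'.
  move=> /(_ erefl (posdefZ g0 p1') h).
  rewrite invmxZ; last by rewrite unitmxZ ?unitfE ?gt_eqF //; exact: posdef_unit.
  rewrite -scalemxAr -scalemxAl.
  have -> : ((r ^+ M.+2) ^+ 2)^-1 = c ^+ M.+2.
    by rewrite /c -exprM mulnC exprM exprVn.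
  by [].
pose Qn (p : pnode E M.+1) := invmx (Pn A P c M.+1 (thead (val p)) (val (val p))).
split; first exact: ltW.
exists Qn; split.
  move=> p; have hs : size (val (val p)) = M.+1 := size_tuple _.
  split; first by apply: sym_inv; exact: Pn_sym.
  by apply: posdef_inv; [exact: Pn_sym | exact: Pn_pd].
move=> p p' sg; rewrite inE /= => /existsP[e /and3P[hp /eqP hs' /eqP he]].
subst sg.
have hs : size (val (val p)) = M.+1 := size_tuple _.
have hsz' : size (val (val p')) = M.+1 := size_tuple _.
rewrite /Qn.
have hp1 : is_path E (rcons (val (val p)) e) := hp.
have hs1 : val (val p') = behead (rcons (val (val p)) e) := hs'.
move: hp1 hs1 hs hsz'; clear hp hs'.
move: (thead (val p)) (thead (val p')) (val (val p)) (val (val p')) => e0 e0' s s'.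
case: s => [//|x s1] hp hs' hs hsz'.
have hend : endv e0 (x :: s1) = e.1.1.
  move: hp; rewrite /is_path => /andP[_] /=.
  by rewrite rcons_path => /andP[_ /eqP].
have hend' : endv e0' s' = e.1.2 by rewrite hs' /endv /= last_rcons.
have hend2 : endv e0' (behead (rcons (x :: s1) e)) = e.1.2 by rewrite -hs'.
have step := Pn_step A P c0 hs hend hend2; rewrite -hs' in step.
set X := Pn A P c M.+1 e0 (x :: s1).
set Y' := Pn A P c M.+1 e0' s'.
have hX : posdef X by apply: Pn_pd.
have hY' : posdef Y' by apply: Pn_pd.
have sX : X^T = X by apply: Pn_sym.
have sY' : Y'^T = Y' by apply: Pn_sym.
have ci0 : 0 < c^-1 by rewrite invr_gt0.
have hY : posdef (c^-1 *: Y') := posdefZ ci0 hY'.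
have sY : (c^-1 *: Y')^T = c^-1 *: Y' by rewrite linearZ /= sY'.
have hpath : is_path E (rcons (x :: s1) e) := hp.
have hd := Hd (x :: s1) e hs hpath.
have h : psd (c^-1 *: Y' - ((A e.2)^T)^T *m X *m (A e.2)^T).
  rewrite trmxK step scalerBr subsubK.
  have -> : c ^+ M.+1 = c^-1 * c ^+ M.+2 by rewrite [c ^+ M.+2]exprS mulrA mulVf ?gt_eqF // mul1r.
  by rewrite -scalerA -scalerBr; apply: psdZ => //; apply: ltW.
have := dual_psd sX hX sY hY h.
rewrite invmxZ; last by rewrite unitmxZ ?unitfE ?gt_eqF //; exact: posdef_unit.
rewrite invrK trmxK => h2.
have -> : r ^+ 2 = c^-1 by rewrite /c invrK.
have -> : (A e.2)^T *m invmx Y' *m A e.2 =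
   c^-1 *: ((A e.2)^T *m (c *: invmx Y') *m A e.2).
  by rewrite -scalemxAr -scalemxAl scalerA mulVf ?gt_eqF // scale1r.
by rewrite -scalerBr; apply: psdZ => //; apply: ltW.
Qed.
End Key.

Theorem theorem3p9 (R : realType) (n : nat) (V L : finType)
  (E : {set V * V * L}) (A : L -> 'M[R]_n) (T : nat) :
  strongly_connected E -> (1 <= T)%N ->
  gamma_pathdep E A T.-1 <=
    powR (gamma_star (prodlift_edges E T) (prodlift_mx A (T:=T))) (T%:R^-1).
Proof.
move=> _ T1.
have hstep : forall r, 0 < r ->
    feas (prodlift_edges E T) (prodlift_mx A (T:=T)) (r ^+ T) ->
    gamma_pathdep E A T.-1 <= r.
  move=> r r0; case: T T1 => [//|[|M]] _ hq /=.
    rewrite gamma_starE; apply: (ge_inf _); first by exists 0; exact: feas_lb.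
    exact: key_T1.
  rewrite gamma_starE; apply: (ge_inf _); first by exists 0; exact: feas_lb.
  exact: key_step.
rewrite gamma_starE.
set m := inf _.
have [g0 hg0] := feas_ne (prodlift_edges E T) (prodlift_mx A (T:=T)).
have m0 : 0 <= m by apply: lb_le_inf; [exists g0 | exact: feas_lb].
set k := m `^ T%:R^-1.
have k0 : 0 <= k := powR_ge0 _ _.
apply/ler_addgt0Pr => eps eps0.
have r0 : 0 < k + eps by lra.
apply: hstep => //.
have Tpos : 0 < T%:R :> R by rewrite ltr0n.
have mk : m = k `^ T%:R by rewrite /k -powRrM mulVf ?gt_eqF // powRr1.
have : m < (k + eps) ^+ T.
  rewrite mk -powR_mulrn; last lra.
  by apply: gt0_ltr_powR => //; rewrite ?nnegrE; lra.
move/(inf_lt (ex_intro _ g0 hg0)) => [y hy ylt].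
exact: feas_up hy (ltW ylt).
Qed.
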